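(* Let $n\ge3$, $t_1<\dots<t_n$, and for $j=1,\dots,n-1$ let $\lambda_{0,j}\le0\le\lambda_{1,j}$ be real and $\varphi_j=\Phi_{(\lambda_{0,j},\lambda_{1,j})}$. Let $H_1,\dots,H_n$ be the generalized hat functions built from $\varphi_1,\dots,\varphi_{n-1}$ and $t_1<\dots<t_n$. Then $0\le\sum_{j=1}^nH_j(t)\le1$ for all $t\in[t_1,t_n]$.
   Context: $\Phi_{(\lambda_0,\lambda_1)}$ is the unique solution of $(\frac{d}{dt}-\lambda_0)(\frac{d}{dt}-\lambda_1)u=0$ with $u(0)=0$, $u'(0)=1$ (it is strictly increasing on $\mathbb{R}$ when $\lambda_0\le0\le\lambda_1$). Generalized hat functions: for $2\le j\le n-1$, $H_j(t)=\frac{\varphi_{j-1}(t-t_{j-1})}{\varphi_{j-1}(t_j-t_{j-1})}$ on $[t_{j-1},t_j]$, $H_j(t)=\frac{\varphi_j(t-t_{j+1})}{\varphi_j(t_j-t_{j+1})}$ on $[t_j,t_{j+1}]$, and $0$ elsewhere on $[t_1,t_n]$; $H_1(t)=\frac{\varphi_1(t-t_2)}{\varphi_1(t_1-t_2)}$ on $[t_1,t_2]$ and $0$ elsewhere; $H_n(t)=\frac{\varphi_{n-1}(t-t_{n-1})}{\varphi_{n-1}(t_n-t_{n-1})}$ on $[t_{n-1},t_n]$ and $0$ elsewhere. *)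

(* Defs.v *)
From Stdlib Require Import Reals.
From Coquelicot Require Import Coquelicot.
Open Scope R_scope.

(* u is the solution of (d/dt - l0)(d/dt - l1) u = 0, u(0)=0, u'(0)=1,
   i.e. u'' - (l0+l1) u' + l0 l1 u = 0 on R (u twice differentiable).
   Such a solution exists and is unique; this predicate pins down
   Phi_(l0,l1). *)
Definition IsPhi (l0 l1 : R) (u : R -> R) : Prop :=
  (forall t, ex_derive u t) /\
  (forall t, ex_derive (Derive u) t) /\
  (forall t, Derive (Derive u) t - (l0 + l1) * Derive u t + l0 * l1 * u t = 0) /\
  u 0 = 0 /\ Derive u 0 = 1.

Definition hat (n : nat) (t : nat -> R) (phi : nat -> R -> R) (j : nat) (x : R) : R :=
  if Nat.eqb j 1 then
    (if Rle_dec (t 1%nat) x then if Rle_dec x (t 2%nat) then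
       phi 1%nat (x - t 2%nat) / phi 1%nat (t 1%nat - t 2%nat) else 0 else 0)
  else if Nat.eqb j n then
    (if Rle_dec (t (n-1)%nat) x then if Rle_dec x (t n) then
       phi (n-1)%nat (x - t (n-1)%nat) / phi (n-1)%nat (t n - t (n-1)%nat) else 0 else 0)
  else
    (if Rle_dec (t (j-1)%nat) x then
       if Rle_dec x (t j) then
         phi (j-1)%nat (x - t (j-1)%nat) / phi (j-1)%nat (t j - t (j-1)%nat)
       else if Rle_dec x (t (S j)) then
         phi j (x - t (S j)) / phi j (t j - t (S j))
       else 0
     else 0).

Definition hat_sum (n : nat) (t : nat -> R) (phi : nat -> R -> R) (x : R) : R :=
  sum_f_R0 (fun k => hat n t phi (S k) x) (n - 1).

(* Main.v *)
Require Import Defs.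
From Stdlib Require Import Reals Lra Psatz.
From Coquelicot Require Import Coquelicot.
Open Scope R_scope.

Lemma mvt (f df : R -> R) x y : (forall z, is_derive f z (df z)) -> x <= y ->
  exists c, x <= c <= y /\ f y - f x = df c * (y - x).
Proof.
  intros Hd Hxy.
  destruct (MVT_gen f x y df) as [c [Hc Heq]].
  - intros; apply Hd.
  - intros z _. apply continuity_pt_filterlim. apply (@ex_derive_continuous R_AbsRing R_NormedModule f z).
    eexists; apply Hd.
  - exists c. rewrite Rmin_left in Hc by lra. rewrite Rmax_right in Hc by lra. auto.
Qed.

Lemma mono (f df : R -> R) : (forall z, is_derive f z (df z)) -> (forall z, 0 <= df z) ->
  forall x y, x <= y -> f x <= f y.
Proof.
  intros Hd Hp x y Hxy. destruct (mvt f df x y Hd Hxy) as [c [_ E]].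
  specialize (Hp c). nra.
Qed.

Lemma smono (f df : R -> R) : (forall z, is_derive f z (df z)) -> (forall z, 0 < df z) ->
  forall x y, x < y -> f x < f y.
Proof.
  intros Hd Hp x y Hxy. destruct (mvt f df x y Hd (Rlt_le _ _ Hxy)) as [c [_ E]].
  specialize (Hp c). nra.
Qed.

Lemma d_expmul (a : R) (g dg : R -> R) s : is_derive g s (dg s) ->
  is_derive (fun s => exp (- a * s) * g s) s (exp (- a * s) * (dg s - a * g s)).
Proof.
  intros H.
  assert (He : is_derive (fun s => exp (- a * s)) s (- a * exp (- a * s))).
  { apply (is_derive_comp exp (fun s => - a * s) s (exp (-a*s)) (-a)).
    apply is_derive_exp.
    auto_derive; [auto | ring]. }
  pose proof (is_derive_mult _ _ s _ _ He H) as M.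
  replace (exp (- a * s) * (dg s - a * g s)) with
    (plus (mult (- a * exp (- a * s)) (g s)) (mult (exp (- a * s)) (dg s))).
  apply M. intros; apply Rmult_comm.
  unfold plus, mult; simpl. unfold mult; simpl. ring.
Qed.

Lemma d_shift (f : R -> R) h s l : is_derive f (s - h) l -> is_derive (fun s => f (s - h)) s l.
Proof.
  intros H.
  assert (D : is_derive (fun s : R => s - h) s 1) by (auto_derive; [auto | ring]).
  pose proof (is_derive_comp f (fun s => s - h) s l 1 H D) as M.
  replace l with (scal 1 l). exact M.
  unfold scal; simpl; unfold mult; simpl; ring.
Qed.

Lemma lin2 c1 c2 (f g : R -> R) df dg s : is_derive f s df -> is_derive g s dg ->
  is_derive (fun s => c1 * f s + c2 * g s) s (c1 * df + c2 * dg).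
Proof.
  intros Hf Hg.
  pose proof (is_derive_scal f s c1 df Hf) as A.
  pose proof (is_derive_scal g s c2 dg Hg) as B.
  exact (@is_derive_plus R_AbsRing R_NormedModule _ _ s _ _ A B).
Qed.

Lemma const0 (f df : R -> R) : (forall z, is_derive f z (df z)) -> (forall z, df z = 0) ->
  forall x y, f x = f y.
Proof.
  intros Hd H0 x y. destruct (Rle_dec x y).
  - destruct (mvt f df x y Hd r) as [c [_ E]]. rewrite H0 in E. lra.
  - destruct (mvt f df y x Hd ltac:(lra)) as [c [_ E]]. rewrite H0 in E. lra.
Qed.

Lemma phi_sign a b phi : IsPhi a b phi ->
  forall s, (0 < s -> 0 < phi s) /\ (s < 0 -> phi s < 0).
Proof.
  intros [H1 [H2 [H3 [H4 H5]]]].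
  set (p1 := Derive phi) in *. set (p2 := Derive p1) in *.
  assert (D1 : forall s, is_derive phi s (p1 s)) by (intro; apply Derive_correct; auto).
  assert (D2 : forall s, is_derive p1 s (p2 s)) by (intro; apply Derive_correct; auto).
  set (u := fun s => exp (- a * s) * ((fun s => 1 * p1 s + (- b) * phi s) s)).
  assert (Du : forall s, is_derive u s ((fun s => exp (- a * s) * ((1 * p2 s + (- b) * p1 s) - a * (1 * p1 s + (-b) * phi s))) s)).
  { intro s. apply (d_expmul a (fun s => 1 * p1 s + (-b) * phi s) (fun s => 1 * p2 s + (-b) * p1 s)).
    apply lin2; auto. }
  assert (U : forall s, u s = u 0).
  { intro s. apply (const0 _ _ Du). intro z. simpl.
    specialize (H3 z). replace (1 * p2 z + - b * p1 z - a * (1 * p1 z + - b * phi z))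
      with (p2 z - (a + b) * p1 z + a * b * phi z) by ring. rewrite H3. ring. }
  assert (Pos : forall s, 0 < p1 s - b * phi s).
  { intro s. specialize (U s). unfold u in U. rewrite H4, H5 in U.
    replace (- a * 0) with 0 in U by ring. rewrite exp_0 in U.
    pose proof (exp_pos (- a * s)). nra. }
  set (F := fun s => exp (- b * s) * phi s).
  assert (DF : forall s, is_derive F s ((fun s => exp (- b * s) * (p1 s - b * phi s)) s)).
  { intro s. apply (d_expmul b phi p1). auto. }
  assert (FS := smono F _ DF).
  assert (F0 : F 0 = 0) by (unfold F; rewrite H4; ring).
  intro s. split; intro Hs.
  - assert (A := FS ltac:(intro z; pose proof (Pos z); pose proof (exp_pos (-b*z)); simpl; nra) 0 s Hs).
    unfold F in A. rewrite H4 in A. pose proof (exp_pos (-b*s)). nra.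
  - assert (A := FS ltac:(intro z; pose proof (Pos z); pose proof (exp_pos (-b*z)); simpl; nra) s 0 Hs).
    unfold F in A. rewrite H4 in A. pose proof (exp_pos (-b*s)). nra.
Qed.

Lemma interval a b phi h s : a <= 0 <= b -> IsPhi a b phi -> 0 < h -> 0 <= s <= h ->
  0 <= phi (s - h) / phi (- h) + phi s / phi h <= 1.
Proof.
  intros Hab HP Hh Hs.
  pose proof (phi_sign a b phi HP) as SG.
  destruct HP as [H1 [H2 [H3 [H4 H5]]]].
  set (N := phi (-h)). set (P := phi h).
  assert (HN : N < 0) by (apply (SG (-h)); lra).
  assert (HPp : 0 < P) by (apply (SG h); lra).
  set (c1 := / N). set (c2 := / P).
  assert (Hc1 : c1 < 0) by (apply Rinv_lt_0_compat; auto).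
  assert (Hc2 : 0 < c2) by (apply Rinv_0_lt_compat; auto).
  assert (Hphi_nonneg : forall z, 0 <= z -> 0 <= phi z).
  { intros z Hz. destruct (Req_dec z 0) as [->|]. lra. left; apply SG; lra. }
  assert (Hphi_nonpos : forall z, z <= 0 -> phi z <= 0).
  { intros z Hz. destruct (Req_dec z 0) as [->|]. lra. left; apply SG; lra. }
  replace (phi (s - h) / N + phi s / P) with (c1 * phi (s - h) + c2 * phi s) by (unfold c1, c2, Rdiv; ring).
  split.
  { pose proof (Hphi_nonpos (s - h) ltac:(lra)). pose proof (Hphi_nonneg s ltac:(lra)). nra. }
  set (p1 := Derive phi) in *. set (p2 := Derive p1) in *.
  assert (D1 : forall s, is_derive phi s (p1 s)) by (intro; apply Derive_correct; auto).
  assert (D2 : forall s, is_derive p1 s (p2 s)) by (intro; apply Derive_correct; auto).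
  set (w0 := fun s => c1 * phi (s - h) + c2 * phi s).
  set (w := fun s => 1 * w0 s + (-1) * (fun _ : R => 1) s).
  set (w1 := fun s => c1 * p1 (s - h) + c2 * p1 s).
  set (w2 := fun s => c1 * p2 (s - h) + c2 * p2 s).
  set (dw := fun s => 1 * w1 s + (-1) * 0).
  set (ddw := fun s => 1 * w2 s + (-1) * 0).
  assert (Dw0 : forall s, is_derive w0 s (w1 s)).
  { intro z. apply lin2; [apply d_shift|]; auto. }
  assert (Dw1 : forall s, is_derive w1 s (w2 s)).
  { intro z. apply lin2; [apply d_shift|]; auto. }
  assert (Dw : forall s, is_derive w s (dw s)).
  { intro z. apply lin2; auto. apply (is_derive_const 1 z). }
  assert (Ddw : forall s, is_derive dw s (ddw s)).
  { intro z. apply lin2; auto. apply (is_derive_const 0 z). }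
  set (u := fun s => exp (- a * s) * ((fun s => 1 * dw s + (- b) * w s) s)).
  assert (Du : forall s, is_derive u s ((fun s => exp (- a * s) * ((1 * ddw s + (- b) * dw s) - a * (1 * dw s + (-b) * w s))) s)).
  { intro z. apply (d_expmul a (fun s => 1 * dw s + (-b) * w s) (fun s => 1 * ddw s + (-b) * dw s)).
    apply lin2; auto. }
  assert (Um : forall x y, x <= y -> u x <= u y).
  { apply (mono _ _ Du). intro z. simpl.
    assert (E1 : p2 (z - h) = (a + b) * p1 (z - h) - a * b * phi (z - h)) by (pose proof (H3 (z - h)); lra).
    assert (E2 : p2 z = (a + b) * p1 z - a * b * phi z) by (pose proof (H3 z); lra).
    unfold ddw, dw, w, w2, w1, w0. rewrite E1, E2.
    apply Rmult_le_pos; [left; apply exp_pos|]. ring_simplify. nra.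
 }
  set (F := fun s => exp (- b * s) * w s).
  assert (DF : forall s, is_derive F s ((fun s => exp (- b * s) * (dw s - b * w s)) s)).
  { intro z. apply (d_expmul b w dw). auto. }
  assert (F0 : F 0 = 0).
  { unfold F, w, w0. replace (0 - h) with (-h) by ring. rewrite H4. fold N.
    unfold c1. field. lra. }
  assert (Fh : F h = 0).
  { unfold F, w, w0. replace (h - h) with 0 by ring. rewrite H4. fold P.
    unfold c2. field. lra. }
  assert (Fs : F s <= 0).
  { destruct (Rle_dec (F s) 0) as [|Hn]; auto. exfalso.
    destruct (mvt F _ 0 s DF ltac:(lra)) as [c [Hc Ec]].
    destruct (mvt F _ s h DF ltac:(lra)) as [d [Hd Ed]].
    simpl in Ec, Ed. rewrite F0 in Ec. rewrite Fh in Ed.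
    assert (Hs0 : 0 < s).
    { destruct (Req_dec s 0) as [E|]; [|lra]. rewrite E, F0 in Hn. lra. }
    assert (Hsh : s < h).
    { destruct (Req_dec s h) as [E|]; [|lra]. rewrite E, Fh in Hn. lra. }
    pose proof (Um c d ltac:(lra)) as Ucd. unfold u in Ucd.
    pose proof (exp_pos (- b * c)). pose proof (exp_pos (- b * d)).
    pose proof (exp_pos (- a * c)). pose proof (exp_pos (- a * d)).
    set (Xc := dw c - b * w c) in *. set (Xd := dw d - b * w d) in *.
    assert (Q1 : 0 < exp (- b * c) * Xc).
    { apply (Rmult_lt_reg_r (s - 0)); [lra|]. rewrite <- Ec. lra. }
    assert (Q2 : exp (- b * d) * Xd < 0).
    { apply (Rmult_lt_reg_r (h - s)); [lra|]. rewrite <- Ed. lra. }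
    assert (Pc : 0 < Xc).
    { destruct (Rle_dec Xc 0); [|lra]. exfalso. nra. }
    assert (Pd : Xd < 0).
    { destruct (Rle_dec 0 Xd); [|lra]. exfalso. nra. }
    replace (1 * dw c + - b * w c) with Xc in Ucd by (unfold Xc; ring).
    replace (1 * dw d + - b * w d) with Xd in Ucd by (unfold Xd; ring).
    nra. }
  unfold F in Fs. pose proof (exp_pos (- b * s)).
  assert (Ws : w s <= 0) by nra. unfold w, w0 in Ws. lra.
Qed.
Lemma tlt (n : nat) (t : nat -> R) :
  (forall i, (1 <= i)%nat -> (i < n)%nat -> t i < t (S i)) ->
  forall i j, (1 <= i)%nat -> (i < j)%nat -> (j <= n)%nat -> t i < t j.
Proof.
  intros H i j Hi Hij Hj. induction j as [|j IH]. lia.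
  destruct (Nat.eq_dec i j) as [->|Hne]. apply H; lia.
  apply Rlt_trans with (t j). apply IH; lia. apply H; lia.
Qed.

Lemma tle (n : nat) (t : nat -> R) :
  (forall i, (1 <= i)%nat -> (i < n)%nat -> t i < t (S i)) ->
  forall i j, (1 <= i)%nat -> (i <= j)%nat -> (j <= n)%nat -> t i <= t j.
Proof.
  intros H i j Hi Hij Hj. destruct (Nat.eq_dec i j) as [->|]. lra.
  left. apply (tlt n t H); lia.
Qed.

Lemma find_k (n : nat) (t : nat -> R) x : (2 <= n)%nat ->
  t 1%nat <= x <= t n -> exists k, (1 <= k <= n - 1)%nat /\ t k <= x <= t (S k).
Proof.
  intros Hn Hx.
  assert (G : forall m, (1 <= m)%nat -> x <= t (S m) -> exists k, (1 <= k <= m)%nat /\ t k <= x <= t (S k)).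
  { induction m as [|m IH]. lia. intros _ Hm.
    destruct (Nat.eq_dec m 0) as [->|Hm0]. exists 1%nat. split. lia. lra.
    destruct (Rle_dec x (t (S m))) as [Hle|Hgt].
    - destruct (IH ltac:(lia) Hle) as [k [Hk1 Hk2]]. exists k. split. lia. auto.
    - exists (S m). split. lia. lra. }
  destruct (G (n - 1)%nat ltac:(lia)) as [k Hk].
  replace (S (n - 1)) with n by lia. lra.
  exists k. auto.
Qed.

Lemma sum_zero (f : nat -> R) N : (forall i, (i <= N)%nat -> f i = 0) -> sum_f_R0 f N = 0.
Proof.
  induction N; intros H; simpl. apply H; lia.
  rewrite IHN. rewrite (H (S N)); [ring|lia]. intros; apply H; lia.
Qed.

Lemma sum_two (f : nat -> R) p N : (S p <= N)%nat ->
  (forall i, (i <= N)%nat -> i <> p -> i <> S p -> f i = 0) ->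
  sum_f_R0 f N = f p + f (S p).
Proof.
  induction N; intros HN H. lia.
  destruct (Nat.eq_dec p N) as [->|Hne].
  - simpl. destruct N. simpl. ring.
    simpl. rewrite (sum_zero f N). ring. intros i Hi. apply H; lia.
  - simpl. rewrite IHN; [|lia|intros; apply H; lia]. rewrite (H (S N)); [ring|lia|lia|lia].
Qed.

Lemma hat_val (n : nat) (t : nat -> R) (phi : nat -> R -> R) k x :
  (3 <= n)%nat ->
  (forall i, (1 <= i)%nat -> (i < n)%nat -> t i < t (S i)) ->
  (forall j, (1 <= j)%nat -> (j <= n - 1)%nat -> phi j 0 = 0) ->
  (forall j, (1 <= j)%nat -> (j <= n - 1)%nat -> forall s, s <> 0 -> phi j s <> 0) ->
  (1 <= k <= n - 1)%nat -> t k <= x <= t (S k) ->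
  forall j, (1 <= j <= n)%nat ->
  hat n t phi j x =
    if Nat.eqb j k then phi k (x - t (S k)) / phi k (t k - t (S k))
    else if Nat.eqb j (S k) then phi k (x - t k) / phi k (t (S k) - t k)
    else 0.
Proof.
  intros Hn Ht P0 Pnz Hk Hx j Hj.
  pose proof (tlt n t Ht) as LT. pose proof (tle n t Ht) as LE.
  assert (Z : forall i y, (1 <= i <= n - 1)%nat -> y = 0 -> forall c, phi i y / c = 0).
  { intros i y Hi -> c. rewrite P0 by lia. unfold Rdiv. ring. }
  unfold hat.
  destruct (Nat.eqb_spec j k) as [Ejk|Njk];
  [|destruct (Nat.eqb_spec j (S k)) as [Ejk'|Njk']].
  - subst j. destruct (Nat.eqb_spec k 1) as [->|N1].
    + simpl. destruct (Rle_dec (t 1%nat) x); [|lra]. destruct (Rle_dec x (t 2%nat)); [|lra]. reflexivity.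
    + destruct (Nat.eqb_spec k n) as [|Nn]; [lia|].
      destruct (Rle_dec (t (k-1)%nat) x) as [|Hc].
      2:{ exfalso. apply Hc. apply Rle_trans with (t k); [apply LE; lia | lra]. }
      destruct (Rle_dec x (t k)) as [Hxk|Hxk].
      * assert (x = t k) by lra. subst x.
        assert (A1 : phi (k-1)%nat (t k - t (k-1)%nat) <> 0) by
          (apply Pnz; [lia|lia|]; pose proof (LT (k-1)%nat k ltac:(lia) ltac:(lia) ltac:(lia)); lra).
        assert (A2 : phi k (t k - t (S k)) <> 0) by
          (apply Pnz; [lia|lia|]; pose proof (LT k (S k) ltac:(lia) ltac:(lia) ltac:(lia)); lra).
        field_simplify; auto.
      * destruct (Rle_dec x (t (S k))); [reflexivity|lra].
  - subst j. destruct (Nat.eqb_spec (S k) 1) as [|_]; [lia|].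
    destruct (Nat.eqb_spec (S k) n) as [En|Nn].
    + replace (n - 1)%nat with k by lia. rewrite <- En.
      destruct (Rle_dec (t k) x); [|lra]. destruct (Rle_dec x (t (S k))); [reflexivity|lra].
    + replace (S k - 1)%nat with k by lia.
      destruct (Rle_dec (t k) x); [|lra]. destruct (Rle_dec x (t (S k))); [reflexivity|lra].
  - destruct (Nat.lt_ge_cases j k) as [Hlt|Hge].
    +
      destruct (Nat.eqb_spec j 1) as [->|N1].
      * destruct (Rle_dec (t 1%nat) x); [|reflexivity]. destruct (Rle_dec x (t 2%nat)); [|reflexivity].
        apply Z. lia. pose proof (LE 2%nat k ltac:(lia) ltac:(lia) ltac:(lia)). lra.
      * destruct (Nat.eqb_spec j n) as [|Nn]; [lia|].
        destruct (Rle_dec (t (j-1)%nat) x); [|reflexivity].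
        destruct (Rle_dec x (t j)) as [Hc|].
        { exfalso. pose proof (LT j k ltac:(lia) ltac:(lia) ltac:(lia)). lra. }
        destruct (Rle_dec x (t (S j))); [|reflexivity].
        apply Z. lia. pose proof (LE (S j) k ltac:(lia) ltac:(lia) ltac:(lia)). lra.
    +
      assert (Hj2 : (S (S k) <= j)%nat) by lia.
      destruct (Nat.eqb_spec j 1) as [|N1]; [lia|].
      destruct (Nat.eqb_spec j n) as [->|Nn].
      * destruct (Rle_dec (t (n-1)%nat) x); [|reflexivity]. destruct (Rle_dec x (t n)); [|reflexivity].
        apply Z. lia. pose proof (LE (S k) (n-1)%nat ltac:(lia) ltac:(lia) ltac:(lia)). lra.
      * destruct (Rle_dec (t (j-1)%nat) x); [|reflexivity].
        pose proof (LE (S k) (j-1)%nat ltac:(lia) ltac:(lia) ltac:(lia)).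
        pose proof (LT (j-1)%nat j ltac:(lia) ltac:(lia) ltac:(lia)).
        destruct (Rle_dec x (t j)).
        { apply Z. lia. lra. }
        exfalso. lra.
Qed.

Theorem mainTheorem11 (n : nat) (t : nat -> R) (l0 l1 : nat -> R)
  (phi : nat -> R -> R) :
  (3 <= n)%nat ->
  (forall i, (1 <= i)%nat -> (i < n)%nat -> t i < t (S i)) ->
  (forall j, (1 <= j)%nat -> (j <= n - 1)%nat ->
     l0 j <= 0 <= l1 j /\ IsPhi (l0 j) (l1 j) (phi j)) ->
  forall x, t 1%nat <= x <= t n ->
    0 <= hat_sum n t phi x <= 1.
Proof.
  intros Hn Ht Hphi x Hx.
  assert (P0 : forall j, (1 <= j)%nat -> (j <= n - 1)%nat -> phi j 0 = 0).
  { intros j H1 H2. destruct (Hphi j H1 H2) as [_ [_ [_ [_ [E _]]]]]. exact E. }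
  assert (Pnz : forall j, (1 <= j)%nat -> (j <= n - 1)%nat -> forall s, s <> 0 -> phi j s <> 0).
  { intros j H1 H2 s Hs. destruct (Hphi j H1 H2) as [_ HP].
    destruct (phi_sign _ _ _ HP s) as [A B]. destruct (Rlt_le_dec 0 s) as [r|r].
    - pose proof (A r). lra.
    - assert (r' : s < 0) by lra. pose proof (B r'). lra. }
  destruct (find_k n t x ltac:(lia) Hx) as [k [Hk Hxk]].
  unfold hat_sum.
  rewrite (sum_two (fun i => hat n t phi (S i) x) (k - 1)%nat (n - 1)%nat ltac:(lia)).
  2:{ intros i Hi N1 N2. rewrite (hat_val n t phi k x Hn Ht P0 Pnz Hk Hxk (S i) ltac:(lia)).
      destruct (Nat.eqb_spec (S i) k); [lia|]. destruct (Nat.eqb_spec (S i) (S k)); [lia|]. reflexivity. }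
  replace (S (k - 1)) with k by lia. replace (S (S (k - 1))) with (S k) by lia.
  rewrite !(hat_val n t phi k x Hn Ht P0 Pnz Hk Hxk) by lia.
  rewrite Nat.eqb_refl. destruct (Nat.eqb_spec (S k) k); [lia|]. rewrite Nat.eqb_refl.
  destruct (Hphi k ltac:(lia) ltac:(lia)) as [Hab HP].
  pose proof (Ht k ltac:(lia) ltac:(lia)).
  pose proof (interval _ _ _ (t (S k) - t k) (x - t k) Hab HP ltac:(lra) ltac:(lra)) as I.
  replace (x - t k - (t (S k) - t k)) with (x - t (S k)) in I by ring.
  replace (- (t (S k) - t k)) with (t k - t (S k)) in I by ring.
  exact I.
Qed.
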